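(* Let $k\in\mathbb{P}$ and let $b\geq 2$ be an integer. Then the sequence $B=\left(1,\frac{b^2-1}{b-1},\dots,\frac{b^k-1}{b-1}\right)$ is orderly, i.e., $opt_B(M)=grd_B(M)$ for all $M\in\mathbb{P}$.
   Context: $\mathbb{P}$ denotes the positive integers and $\mathbb{N}$ the nonnegative integers. For a sequence $B=(b_1,\dots,b_k)$ of positive integers with $1=b_1<b_2<\cdots<b_k$ and $M\in\mathbb{N}$, $opt_B(M)=\min\{\sum_{i=1}^k x_i : \sum_{i=1}^k b_i x_i=M,\ x_i\in\mathbb{N}\}$. $grd_B(M)$ denotes the number of parts used by the greedy strategy: take as many copies of $b_k$ as possible (without exceeding $M$), then as many copies of $b_{k-1}$ as possible for the remainder, and so on down to $b_1=1$. $B$ is called orderly if $opt_B(M)=grd_B(M)$ for all $M>0$. *)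

(* Defs.v *)
From mathcomp Require Import all_boot.
Set Implicit Arguments. Unset Strict Implicit. Unset Printing Implicit Defensive.

(* A coin system B = (b_1, ..., b_k) is represented as a seq nat, listed in
   increasing order b_1 < ... < b_k. A multiplicity vector x is a seq nat
   of the same length; x_i copies of b_i. *)

Definition value (B x : seq nat) : nat := \sum_(i < size B) nth 0 B i * nth 0 x i.
Definition parts (B x : seq nat) : nat := \sum_(i < size B) nth 0 x i.

Definition representation (B : seq nat) (M : nat) (x : seq nat) : Prop :=
  size x = size B /\ value B x = M.

Definition is_opt (B : seq nat) (M n : nat) : Prop :=
  (exists x, representation B M x /\ parts B x = n) /\
  (forall x, representation B M x -> n <= parts B x).

(* greedy on coins listed in DECREASING order *)
Fixpoint grd_desc (C : seq nat) (M : nat) : nat :=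
  match C with
  | [::] => 0
  | c :: C' => M %/ c + grd_desc C' (M %% c)
  end.

Definition grd (B : seq nat) (M : nat) : nat := grd_desc (rev B) M.

Definition orderly (B : seq nat) : Prop := forall M, 0 < M -> is_opt B M (grd B M).

Definition repunit_seq (b k : nat) : seq nat :=
  [seq (b ^ i.+1 - 1) %/ (b - 1) | i <- iota 0 k].

(* Main.v *)
Require Import Defs.
From mathcomp Require Import all_boot.
From mathcomp Require Import zify.

Fixpoint rr (b i : nat) : nat := if i is i'.+1 then b * rr b i' + 1 else 1.

Lemma rr_pos b i : 0 < rr b i.
Proof. by case: i => //= i'; rewrite addn1. Qed.

Lemma rrE b i : 1 < b -> b ^ i.+1 - 1 = rr b i * (b - 1).
Proof.
move=> hb; elim: i => [|i IH]; first by rewrite expn1 mul1n.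
rewrite expnS /=.
have : 0 < b ^ i.+1 by rewrite expn_gt0; lia.
move: IH; set X := b ^ i.+1; set R := rr b i => IH hX.
nia.
Qed.

Lemma repE b k : 1 < b -> repunit_seq b k = [seq rr b i | i <- iota 0 k].
Proof.
move=> hb; rewrite /repunit_seq; apply: eq_map => i.
by rewrite rrE // mulnK // subn_gt0.
Qed.

Definition g b m N := grd_desc (rev [seq rr b i | i <- iota 0 m]) N.

Lemma gS b m N : g b m.+1 N = N %/ rr b m + g b m (N %% rr b m).
Proof. by rewrite /g -addn1 iotaD map_cat rev_cat /= add0n. Qed.

Lemma g_0 b N : g b 0 N = 0.
Proof. by []. Qed.

Lemma g0 b m : g b m 0 = 0.
Proof. by elim: m => [|m IH] //; rewrite gS div0n mod0n IH. Qed.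

Lemma gtop b m c N : g b m.+1 (c * rr b m + N) = c + g b m.+1 N.
Proof. by rewrite !gS divnMDl ?rr_pos // modnMDl addnA. Qed.

Lemma gsmall b m N : N < rr b m -> g b m.+1 N = g b m N.
Proof. by move=> h; rewrite gS divn_small // modn_small. Qed.

Lemma gstep b m s : 1 < b -> g b m s <= g b m s.+1 + (b - 1).
Proof.
move=> hb; elim: m s => [|m IH] s; first by rewrite !g_0.
set d := rr b m.
have hd : 0 < d by apply: rr_pos.
rewrite {1}(divn_eq s d).
have ht : s %% d < d by rewrite ltn_mod.
have -> : s.+1 = s %/ d * d + (s %% d).+1 by rewrite {1}(divn_eq s d) addnS.
rewrite !gtop gsmall //.
case: (ltnP (s %% d).+1 d) => h.
  rewrite gsmall //; have := IH (s %% d); lia.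
have hE : (s %% d).+1 = d by apply/eqP; rewrite eqn_leq h ht.
rewrite hE; have -> : g b m.+1 d = 1 by rewrite -[d]addn0 -[d in d + 0]mul1n gtop g0.
case: m IH @d hd ht h hE => [|m] IH d hd ht h hE; first by rewrite g_0; lia.
have -> : s %% d = b * rr b m + 0 by rewrite addn0; apply/eqP; rewrite -eqSS hE /d /= addn1.
rewrite gtop g0; lia.
Qed.

Lemma gstepn b m s q : 1 < b -> g b m s <= g b m (s + q) + q * (b - 1).
Proof.
move=> hb; elim: q => [|q IH]; first by rewrite addn0 mul0n addn0.
have := @gstep b m (s + q) hb; rewrite addnS; lia.
Qed.

Lemma gQ b m N : 1 < b -> g b m.+2 N <= g b m.+1 N.
Proof.
move=> hb; set d := rr b m.+1.
have hd : 0 < d by apply: rr_pos.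
have ht : N %% d < d by rewrite ltn_mod.
have hd2 : d = b * rr b m + 1 by [].
have hN := divn_eq N d.
rewrite {1}hN gtop gsmall //.
move: (N %/ d) (N %% d) hN => q t hN.
have -> : N = (q * b) * rr b m + (t + q) by rewrite hN hd2; nia.
rewrite gtop; have := @gstepn b m.+1 t q hb.
move: (g b m.+1 _) (g b m.+1 (_ + _)) => x y; nia.
Qed.

Lemma LB b k (f : nat -> nat) : 1 < b ->
  g b k (\sum_(i < k) rr b i * f i) <= \sum_(i < k) f i.
Proof.
move=> hb; elim: k => [|k IH]; first by rewrite g_0.
rewrite !big_ord_recr /= addnC (mulnC (rr b k)) gtop.
have : g b k.+1 (\sum_(i < k) rr b i * f i) <= g b k (\sum_(i < k) rr b i * f i).
  case: k IH => [|k] IH; first by rewrite big_ord0 g0.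
  exact: gQ.
move: IH; move: (g b k.+1 _) (g b k _) => x y; move: (\sum_(i < k) f i) => S; lia.
Qed.

Fixpoint gx b m N : seq nat :=
  if m is m'.+1 then rcons (gx b m' (N %% rr b m')) (N %/ rr b m') else [::].

Lemma size_gx b m N : size (gx b m N) = m.
Proof. by elim: m N => [|m IH] N //=; rewrite size_rcons IH. Qed.

Lemma gx_val b m N : \sum_(i < m.+1) rr b i * nth 0 (gx b m.+1 N) i = N.
Proof.
elim: m N => [|m IH] N; first by rewrite big_ord1 /= mul1n divn1.
rewrite big_ord_recr.
have -> : gx b m.+2 N = rcons (gx b m.+1 (N %% rr b m.+1)) (N %/ rr b m.+1) by [].
under eq_bigr => i _ do rewrite nth_rcons size_gx /= ltn_ord.
rewrite IH nth_rcons size_gx ltnn eqxx. have E := divn_eq N (rr b m.+1); rewrite /= in E *; move: (N %/ _) (N %% _) E => q t E; lia.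
Qed.

Lemma gx_parts b m N : \sum_(i < m) nth 0 (gx b m N) i = g b m N.
Proof.
elim: m N => [|m IH] N; first by rewrite big_ord0 g_0.
rewrite big_ord_recr gS.
have -> : gx b m.+1 N = rcons (gx b m (N %% rr b m)) (N %/ rr b m) by [].
under eq_bigr => i _ do rewrite nth_rcons size_gx /= ltn_ord.
by rewrite IH nth_rcons size_gx ltnn eqxx addnC.
Qed.

Theorem lemma3p1 (k b : nat) : 0 < k -> 2 <= b -> orderly (repunit_seq b k).
Proof.
move=> hk hb M hM; rewrite repE //.
have hn : forall i : 'I_k, nth 0 [seq rr b i | i <- iota 0 k] i = rr b i.
  by move=> i; rewrite (nth_map 0) ?size_iota // nth_iota // add0n.
change (grd [seq rr b i | i <- iota 0 k] M) with (g b k M).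
rewrite /is_opt /representation /parts /value size_map size_iota.
split.
  exists (gx b k M); split; last by rewrite gx_parts.
  split; first by rewrite size_gx.
  under eq_bigr => i _ do rewrite hn.
  by case: k hk hn => // k _ _; rewrite gx_val.
move=> x [hs hv].
rewrite -hv; under eq_bigr => i _ do rewrite hn.
exact: (@LB b k (fun i => nth 0 x i)).
Qed.
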